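(* Let $X$ be a Banach space and $(x_n)_{n\in\mathbb{N}}$ a sequence in $X$. Let $E=\left\{s \in S : \left(\sum_{i=1}^n x_{s(i)}\right)_n \text{ is bounded}\right\}$ and $F=\left\{p \in P : \left(\sum_{i=1}^n x_{p(i)}\right)_n \text{ is bounded}\right\}$. If $E \neq S$ (equivalently, $F \neq P$), then $E$ is meager in $S$ and $F$ is meager in $P$.
   Context: $S=\{s\in\mathbb{N}^{\mathbb{N}} : s \text{ strictly increasing}\}$ and $P=\{p\in\mathbb{N}^{\mathbb{N}} : p \text{ a bijection of } \mathbb{N}\}$, both with the subspace topology of $\mathbb{N}^{\mathbb{N}}$ carrying the product topology of discrete spaces $\mathbb{N}$ (both are Polish spaces). *)

(* Defs.v *)
From HB Require Import structures.
From mathcomp Require Import all_boot all_order all_algebra.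
From mathcomp Require Import all_classical all_reals all_analysis.
Set Implicit Arguments. Unset Strict Implicit. Unset Printing Implicit Defensive.
Import Order.TTheory GRing.Theory Num.Theory.
Local Open Scope classical_set_scope.
Local Open Scope ring_scope.

(* The Baire space N^N: the type [nat -> nat] with the product topology
   (topology of pointwise convergence, [prod_topology]) of discrete copies of
   [nat] ([nat] carries the discrete topology in mathcomp-analysis). *)
Notation NN := {ptws nat -> nat}.

Definition Sset : set NN := [set s | forall i j, (i < j)%N -> (s i < s j)%N].
Definition Pset : set NN := [set p | bijective p].

(* The subspaces S and P, as subtypes with the initial (= subspace) topology
   induced by the inclusion into N^N. *)
Notation Stype := (initial_topology (fun s : set_type Sset => val s)).
Notation Ptype := (initial_topology (fun p : set_type Pset => val p)).

Definition nowhere_dense (T : topologicalType) (N : set T) : Prop :=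
  (closure N)° = set0.
Definition meager (T : topologicalType) (M : set T) : Prop :=
  exists N : nat -> set T, (forall k, nowhere_dense (N k)) /\ M `<=` \bigcup_k N k.

(* partial sums  n |-> \sum_{i<n} x (f i)  (i.e. x_{f(0)} + ... + x_{f(n-1)}) *)
Definition psums (R : realType) (X : normedModType R) (x : nat -> X) (f : nat -> nat)
  : nat -> X := fun n => \sum_(i < n) x (f i).

Definition Eset (R : realType) (X : normedModType R) (x : nat -> X) : set Stype :=
  [set s : Stype | bounded_fun (psums x (val s))].
Definition Fset (R : realType) (X : normedModType R) (x : nat -> X) : set Ptype :=
  [set p : Ptype | bounded_fun (psums x (val p))].

(* Main.v *)
Require Import Defs.
From HB Require Import structures.
From mathcomp Require Import all_boot all_order all_algebra.
From mathcomp Require Import all_classical all_reals all_analysis.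
Import Order.TTheory GRing.Theory Num.Theory.
Local Open Scope classical_set_scope.

Lemma ptws_agree (c : NN) N : nbhs c [set f : NN | forall i, (i < N)%N -> f i = c i].
Proof.
elim: N => [|N IH].
  by apply: filterS (filterT); move=> f _ i.
have hN : nbhs c ((@proj nat (fun _ => nat) N) @^-1` [set c N]).
  have := @proj_continuous nat (fun _ => nat) N c [set c N].
  rewrite nbhs_principalE; apply; exact/principal_filterP.
apply: filterS (filterI IH hN) => f [Hf Hn] i; rewrite ltnS leq_eqVlt.
by case/orP => [/eqP->|/Hf] //.
Qed.

Lemma ptws_cvg (w : nat -> NN) (c : NN) :
  (forall i, exists K, forall k, (K <= k)%N -> w k i = c i) -> w @ \oo --> c.
Proof.
move=> H; apply: (iffRL (@pointwise_cvgP nat nat (w @ \oo) c _)) => i.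
have [K HK] := H i.
move=> A; rewrite nbhs_principalE => /principal_filterP Ac.
by exists K => // k /= /HK ->.
Qed.

Section Init.
Variable D : set NN.
Local Notation W := (initial_topology (fun s : set_type D => val s)).

Lemma init_nbhs (s : W) (A : set NN) : nbhs (val s) A ->
  nbhs s [set t : W | A (val t)].
Proof. by move=> /(@initial_continuous _ _ (fun s : set_type D => val s) s). Qed.

Lemma init_cvg (w : nat -> W) (z : W) :
  (fun k => val (w k)) @ \oo --> val z -> w @ \oo --> z.
Proof.
move=> H A; rewrite nbhsE => -[B [oB Bz] BA].
case: oB => C oC CB.
have : nbhs (val z) C.
  apply: open_nbhs_nbhs; split => //.
  by rewrite -CB in Bz.
move=> /H [K _ HK]; exists K => // k /HK Hk; apply: BA.
by rewrite -CB.
Qed.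
End Init.

Lemma psums_agree (R : realType) (X : normedModType R) (x : nat -> X) (f g : nat -> nat) N :
  (forall i, (i < N)%N -> f i = g i) -> psums x f N = psums x g N.
Proof. by move=> H; rewrite /psums; apply: eq_bigr => i _; rewrite H. Qed.

Lemma nd_lemma (R : realType) (X : normedModType R) (x : nat -> X) (M : R) (D : set NN) :
  (forall (z : set_type D) k, exists t : set_type D, exists N,
     (forall i, (i < k)%N -> val t i = val z i) /\ (M < `|psums x (val t) N|)%R) ->
  nowhere_dense [set t : initial_topology (fun s : set_type D => val s) |
                   forall n, (`|psums x (val t) n| <= M)%R].
Proof.
move=> H; rewrite /nowhere_dense; apply/seteqP; split => // z Hz.
have H' : forall k, exists p : (set_type D * nat),
   (forall i, (i < k)%N -> val p.1 i = val z i) /\ (M < `|psums x (val p.1) p.2|)%R.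
  by move=> k; have [t [N HtN]] := H z k; exists (t, N).
have [e He] := choice H'.
have cv : (fun k => (e k).1 : initial_topology (fun s : set_type D => val s)) @ \oo --> z.
  apply: init_cvg; apply: ptws_cvg => i; exists i.+1 => k ik.
  by case: (He k) => + _; apply.
have [K _ HK] := cv _ Hz.
have /= := HK K (leqnn K).
set t := (e K).1; set N := (e K).2.
move=> /(_ [set u : initial_topology (fun s : set_type D => val s) |
          forall i, (i < N)%N -> val u i = val t i]).
case.
  have := @init_nbhs D t _ (ptws_agree (val t) N). exact.
move=> u [Cu Au].
have := (He K).2; rewrite -/t -/N -(@psums_agree R X x _ _ _ Au) => hlt.
by have := Cu N; rewrite leNgt hlt.
Qed.

Definition splice (z s0 : nat -> nat) (k J : nat) : nat -> nat :=
  fun i => if (i < k)%N then z i else s0 (i - k + J)%N.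

Lemma psums_splice (R : realType) (X : normedModType R) (x : nat -> X) z s0 k J n :
  psums x (splice z s0 k J) (k + n) = (psums x z k + (psums x s0 (J + n) - psums x s0 J))%R.
Proof.
rewrite /psums !big_split_ord /=; congr (_ + _)%R.
  by apply: eq_bigr => i _; rewrite /splice /= ltn_ord.
rewrite addrAC subrr add0r; apply: eq_bigr => i _.
by rewrite /splice /= ltnNge leq_addr /= addKn addnC.
Qed.

Lemma unbdd (R : realType) (X : normedModType R) (f : nat -> X) :
  ~ bounded_fun f -> forall (B : R) (J : nat), exists n, (J <= n)%N /\ (B < `|f n|)%R.
Proof.
move=> nb B J.
have H1 : exists n, (`|B| + \sum_(i < J) `|f i| < `|f n|)%R.
  apply: contra_notP nb => H; apply/(ex_bound f (PF := @globally_properfilter nat setT 0%N I)); exists (`|B| + \sum_(i < J) `|f i|)%R.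
  move=> n _ /=; rewrite leNgt; apply/negP => h; apply: H; by exists n.
have [n hn] := H1; exists n; split.
  rewrite leqNgt; apply/negP => nJ.
  have : (`|f n| <= \sum_(i < J) `|f i|)%R.
    rewrite (bigD1 (Ordinal nJ)) //= lerDl; apply: sumr_ge0 => i _; exact: normr_ge0.
  move=> h; have := lt_le_trans hn h; rewrite ltNge lerDr normr_ge0 //.
by apply: le_lt_trans hn; apply: le_trans (ler_norm B) _; rewrite lerDl; apply: sumr_ge0 => *; exact: normr_ge0.
Qed.

Lemma norm_tri (R : realType) (X : normedModType R) (a b c : X) (M : R) :
  (M + `|a| + `|c| < `|b|)%R -> (M < `|a + (b - c)|)%R.
Proof.
move=> h.
have e : b = ((a + (b - c)) - a + c)%R by rewrite (addrC a) addrK subrK.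
have h2 : (`|b| <= `|a + (b - c)| + `|a| + `|c|)%R.
  rewrite {1}e; apply: le_trans (ler_normD _ _) _; rewrite lerD2r.
  by apply: le_trans (ler_normD _ _) _; rewrite normrN.
have := lt_le_trans h h2; rewrite -!addrA ltrD2r; done.
Qed.

Definition jmax (z : nat -> nat) k := (\max_(i < k) z i).+1.

Lemma Sset_ge {s} : Sset s -> forall j, (j <= s j)%N.
Proof.
move=> hs; elim=> [|j IH] //; exact: leq_ltn_trans IH (hs _ _ (ltnSn j)).
Qed.

Lemma Sset_mono {s} : Sset s -> forall i j, (i <= j)%N -> (s i <= s j)%N.
Proof.
move=> hs i j; rewrite leq_eqVlt => /orP [/eqP->//|/hs/ltnW//].
Qed.

Lemma jmax_gt z k i : (i < k)%N -> (z i < jmax z k)%N.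
Proof. by move=> ik; rewrite /jmax ltnS (leq_bigmax (Ordinal ik)). Qed.

Lemma splice_big (R : realType) (X : normedModType R) (x : nat -> X) s0 (hs0 : Sset s0)
  (nb : ~ bounded_fun (psums x s0)) (z : nat -> nat) k (M : R) :
  exists n, (M < `|psums x (splice z s0 k (jmax z k)) n|)%R.
Proof.
set J := jmax z k.
have [N [JN hN]] := @unbdd R X _ nb (M + `|psums x z k| + `|psums x s0 J|)%R J.
exists (k + (N - J))%N; rewrite psums_splice subnKC //; exact: norm_tri.
Qed.

Lemma splice_S z s0 k : Sset z -> Sset s0 -> Sset (splice z s0 k (jmax z k)).
Proof.
move=> hz hs i j ij; rewrite /splice.
case: ifP => ik; case: ifP => jk.
- exact: hz.
- have h1 := @jmax_gt z _ _ ik.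
  have h2 : (jmax z k <= s0 (j - k + jmax z k))%N.
    have h3 := Sset_ge hs (j - k + jmax z k).
    exact: leq_trans (leq_addl _ _) h3.
  exact: leq_trans h1 h2.
- by move: ik; rewrite (ltn_trans ij jk).
- apply: hs; rewrite ltn_add2r ltn_sub2r //.
  by apply: leq_trans _ ij; rewrite ltnS leqNgt ik.
Qed.

Lemma Sset_inj {s} : Sset s -> injective s.
Proof.
move=> hs a b e; case: (ltngtP a b) => // /hs; rewrite e ltnn //.
Qed.

Lemma splice_inj z s0 k : injective z -> Sset s0 -> injective (splice z s0 k (jmax z k)).
Proof.
move=> hz hs i j; rewrite /splice.
have key : forall a b, (a < k)%N -> z a <> s0 (b - k + jmax z k).
  move=> a b ak e; have := @jmax_gt z _ _ ak; rewrite e ltnNge.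
  by rewrite (leq_trans _ (Sset_ge hs _)) // leq_addl.
case: ifP => ik; case: ifP => jk.
- exact: hz.
- by move/key => /(_ ik).
- by move/esym/key => /(_ jk).
- move/(Sset_inj hs)/eqP; rewrite eqn_add2r => /eqP e.
  move/negbT: ik; move/negbT: jk; rewrite -!leqNgt => jk ik.
  by rewrite -(subnK ik) -(subnK jk) e.
Qed.

Definition swapn (a b y : nat) : nat := if y == a then b else if y == b then a else y.

Lemma swapnK a b : involutive (swapn a b).
Proof.
move=> y; rewrite /swapn.
case: (eqVneq y a) => [->|ya]; first by rewrite eqxx; case: eqP.
case: (eqVneq y b) => [->|yb]; first by rewrite eqxx.
by rewrite (negbTE ya) (negbTE yb).
Qed.

Lemma ext_bij (f : nat -> nat) L :
  (forall i j, (i < L)%N -> (j < L)%N -> f i = f j -> i = j) ->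
  exists q : nat -> nat, bijective q /\ forall i, (i < L)%N -> q i = f i.
Proof.
elim: L => [|L IH] hf.
  by exists id; split => //; exists id.
have [|q [qb qf]] := IH.
  by move=> i j iL jL; apply: hf; apply: ltnW.
exists (swapn (q L) (f L) \o q); split.
  by apply: bij_comp => //; apply: inv_bij; exact: swapnK.
move=> i; rewrite ltnS leq_eqVlt => /orP [/eqP->|iL] /=.
  by rewrite /swapn eqxx.
rewrite /swapn qf //.
have -> : (f i == q L) = false.
  apply/negbTE/eqP => e; rewrite -(qf _ iL) in e.
  by move: iL; rewrite (bij_inj qb e) ltnn.
have -> : (f i == f L) = false.
  apply/negbTE/eqP => /hf; rewrite ltnS ltnW // ltnSn => /(_ isT isT) e.
  by move: iL; rewrite e ltnn.
done.
Qed.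

Lemma cover (R : realType) (X : normedModType R) (x : nat -> X) (D : set NN)
  (E : set (initial_topology (fun s : set_type D => val s))) :
  (forall s, E s -> bounded_fun (psums x (val s))) ->
  E `<=` \bigcup_k [set t : initial_topology (fun s : set_type D => val s) |
                   forall n, (`|psums x (val t) n| <= k%:R)%R].
Proof.
move=> HE s /HE /(ex_bound _ (PF := @globally_properfilter nat setT 0%N I)) [M HM].
exists (Num.Def.archi_bound `|M|) => // n /=.
apply: le_trans (HM n I) _; apply: le_trans (ler_norm M) _.
exact/ltW/archi_boundP/normr_ge0.
Qed.

Theorem mainTheorem2 (R : realType) (X : completeNormedModType R) (x : nat -> X) :
  Eset x <> setT -> meager (Eset x) /\ meager (Fset x).
Proof.
move=> hE.
have [s0 ns0] : exists s0, ~ Eset x s0.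
  apply: contra_notP hE => H; apply/seteqP; split => // s _.
  by apply: contrapT => ns; apply: H; exists s.
have hS : Sset (val s0) := set_mem (valP s0).
set ss := val s0 in hS.
have nb : ~ bounded_fun (psums x ss) := ns0.
split.
  exists (fun k : nat => [set t : Stype | forall n, (`|psums x (val t) n| <= k%:R)%R]); split.
    move=> k; apply: nd_lemma => z k'.
    have hz : Sset (val z) := set_mem (valP z).
    have [n hn] := @splice_big R X x _ hS nb (val z) k' (k%:R)%R.
    exists (exist _ (splice (val z) ss k' (jmax (val z) k') : NN) (mem_set (@splice_S (val z) ss k' hz hS))).
    exists n; split => //= i ik; by rewrite /splice ik.
  by apply: cover => s.
exists (fun k : nat => [set t : Ptype | forall n, (`|psums x (val t) n| <= k%:R)%R]); split.
  move=> k; apply: nd_lemma => z k'.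
  have hz : bijective (val z) := set_mem (valP z).
  have [N hN] := @splice_big R X x _ hS nb (val z) k' (k%:R)%R.
  set f := splice (val z) ss k' (jmax (val z) k') in hN.
  have finj : injective f := @splice_inj (val z) ss k' (bij_inj hz) hS.
  have [q [qb qf]] := @ext_bij f (N + k') (fun i j _ _ => @finj i j).
  exists (exist _ (q : NN) (mem_set (qb : Pset q))).
  exists N; split => /=.
    move=> i ik; rewrite qf; last by rewrite ltn_addl.
    by rewrite /f /splice ik.
  rewrite (@psums_agree R X x _ f) // => i iN; apply: qf; exact: ltn_addr.
by apply: cover => s.
Qed.
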